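(* Let $\nabla$ and $\tilde\nabla$ be Type $\mathcal A$ connections on $\mathbb R^2$ whose Ricci tensors $\rho$ and $\tilde\rho$ are non-degenerate. Then $\nabla$ is linearly equivalent to $\tilde\nabla$ if and only if $\nabla$ is (locally) affinely equivalent to $\tilde\nabla$.
   Context: A torsion-free connection has Christoffel symbols $\nabla_{\partial_{x^i}}\partial_{x^j}=\Gamma_{ij}^k\partial_{x^k}$; curvature $R(X,Y)Z=\nabla_X\nabla_YZ-\nabla_Y\nabla_XZ-\nabla_{[X,Y]}Z$, Ricci tensor $\rho(Y,Z)=\mathrm{Tr}(X\mapsto R(X,Y)Z)$. For real constants, $\Gamma(a,b,c,d,e,f)$ denotes the connection on $\mathbb R^2$ with constant Christoffel symbols $\Gamma_{11}^1=a$, $\Gamma_{11}^2=b$, $\Gamma_{12}^1=\Gamma_{21}^1=c$, $\Gamma_{12}^2=\Gamma_{21}^2=d$, $\Gamma_{22}^1=e$, $\Gamma_{22}^2=f$; these are the Type $\mathcal A$ connections. Two Type $\mathcal A$ connections are linearly equivalent if there is $T\in GL(2,\mathbb R)$ with $T^*\tilde\nabla=\nabla$. They are (locally) affinely equivalent if there exist open sets $U,V\subset\mathbb R^2$ and a diffeomorphism $T:U\to V$ with $T^*\tilde\nabla=\nabla$ on $U$. *)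

(* Defs.v *)
From Stdlib Require Import Reals.
Open Scope R_scope.

(** Points of R^2. Coordinate indices are naturals; 0 is x^1, any other is x^2.
    All sums below range over the indices {0,1}. *)
Definition pt := (R * R)%type.
Definition sum2 (f : nat -> R) : R := f 0%nat + f 1%nat.

(** Type A connection Gamma(a,b,c,d,e,f): constant Christoffel symbols. *)
Record TypeA := mkTypeA { ga : R; gb : R; gc : R; gd : R; ge : R; gf : R }.

(** Gam G i j k = Gamma_{ij}^k  (nabla_{d_i} d_j = Gamma_{ij}^k d_k). *)
Definition Gam (G : TypeA) (i j k : nat) : R :=
  match i, j, k with
  | O, O, O => ga G
  | O, O, _ => gb G
  | O, S _, O | S _, O, O => gc G
  | O, S _, _ | S _, O, _ => gd G
  | S _, S _, O => ge G
  | S _, S _, _ => gf G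
  end.

(** Curvature: R(d_i,d_j)d_k = Rc G i j k m d_m, computed from
    R(X,Y)Z = nabla_X nabla_Y Z - nabla_Y nabla_X Z - nabla_[X,Y] Z
    with constant Christoffel symbols and [d_i,d_j]=0. *)
Definition Rc (G : TypeA) (i j k m : nat) : R :=
  sum2 (fun l => Gam G j k l * Gam G i l m - Gam G i k l * Gam G j l m).

(** Ricci tensor rho(d_j,d_k) = Tr (X |-> R(X,d_j)d_k). *)
Definition ric (G : TypeA) (j k : nat) : R := sum2 (fun i => Rc G i j k i).

Definition ric_nondegenerate (G : TypeA) : Prop :=
  ric G 0 0 * ric G 1 1 - ric G 0 1 * ric G 1 0 <> 0.

(** Pullback equation T^* Gt = G at a point, in coordinates:
    J k l = d_l T^k, H k j i = d_i (d_j T^k). The equation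
    nablat_{T_* d_i} (T_* d_j) = T_* (nabla_{d_i} d_j), k-th component. *)
Definition pullback_eq (G Gt : TypeA) (J : nat -> nat -> R)
    (H : nat -> nat -> nat -> R) (i j k : nat) : Prop :=
  H k j i + sum2 (fun b => sum2 (fun a => Gam Gt b a k * J b i * J a j))
  = sum2 (fun l => Gam G i j l * J k l).

(** Linear equivalence: T(x) = M x with M invertible, T^* Gt = G
    (second derivatives of a linear map vanish). *)
Definition linearly_equivalent (G Gt : TypeA) : Prop :=
  exists M : nat -> nat -> R,
    M 0%nat 0%nat * M 1%nat 1%nat - M 0%nat 1%nat * M 1%nat 0%nat <> 0 /\
    forall i j k : nat, (i < 2)%nat -> (j < 2)%nat -> (k < 2)%nat ->
      pullback_eq G Gt M (fun _ _ _ => 0) i j k.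

Definition coord (k : nat) (p : pt) : R :=
  match k with O => fst p | _ => snd p end.

Definition shift (i : nat) (p : pt) (t : R) : pt :=
  match i with O => (fst p + t, snd p) | _ => (fst p, snd p + t) end.

Definition open2 (U : pt -> Prop) : Prop :=
  forall p, U p -> exists eps, 0 < eps /\
    forall q, Rabs (fst q - fst p) < eps -> Rabs (snd q - snd p) < eps -> U q.

Definition has_partial (U : pt -> Prop) (i : nat) (f g : pt -> R) : Prop :=
  forall p, U p -> derivable_pt_lim (fun t => f (shift i p t)) 0 (g p).

Definition cont_on (U : pt -> Prop) (f : pt -> R) : Prop :=
  forall p, U p -> forall eps, 0 < eps -> exists del, 0 < del /\
    forall q, Rabs (fst q - fst p) < del -> Rabs (snd q - snd p) < del ->
      Rabs (f q - f p) < eps.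

Fixpoint Ck (n : nat) (U : pt -> Prop) (f : pt -> R) : Prop :=
  match n with
  | O => cont_on U f
  | S n' => cont_on U f /\ exists g0 g1 : pt -> R,
      has_partial U 0 f g0 /\ has_partial U 1 f g1 /\ Ck n' U g0 /\ Ck n' U g1
  end.

Definition smooth_on (U : pt -> Prop) (f : pt -> R) : Prop := forall n, Ck n U f.

Definition smooth_map_on (U : pt -> Prop) (T : pt -> pt) : Prop :=
  smooth_on U (fun p => fst (T p)) /\ smooth_on U (fun p => snd (T p)).

Definition diffeo (U V : pt -> Prop) (T : pt -> pt) : Prop :=
  open2 U /\ open2 V /\ (forall p, U p -> V (T p)) /\ smooth_map_on U T /\
  exists S : pt -> pt, (forall q, V q -> U (S q)) /\
    (forall p, U p -> S (T p) = p) /\ (forall q, V q -> T (S q) = q) /\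
    smooth_map_on V S.

Definition affinely_equivalent (G Gt : TypeA) : Prop :=
  exists (U V : pt -> Prop) (T : pt -> pt),
    (exists p, U p) /\ diffeo U V T /\
    exists (dT : nat -> nat -> pt -> R) (ddT : nat -> nat -> nat -> pt -> R),
      (forall k i, (k < 2)%nat -> (i < 2)%nat ->
         has_partial U i (fun p => coord k (T p)) (dT k i)) /\
      (forall k i j, (k < 2)%nat -> (i < 2)%nat -> (j < 2)%nat ->
         has_partial U j (dT k i) (ddT k i j)) /\
      forall p, U p -> forall i j k : nat,
        (i < 2)%nat -> (j < 2)%nat -> (k < 2)%nat ->
        pullback_eq G Gt (fun k l => dT k l p) (fun k a b => ddT k a b p) i j k.

(* Main.v *)
Require Import Defs.
From Stdlib Require Import Reals Lra Lia.
Open Scope R_scope.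

Lemma D_plus f g x l1 l2 L : derivable_pt_lim f x l1 -> derivable_pt_lim g x l2 ->
  L = l1 + l2 -> derivable_pt_lim (fun t => f t + g t) x L.
Proof. intros H1 H2 ->. exact (derivable_pt_lim_plus f g x l1 l2 H1 H2). Qed.
Lemma D_minus f g x l1 l2 L : derivable_pt_lim f x l1 -> derivable_pt_lim g x l2 ->
  L = l1 - l2 -> derivable_pt_lim (fun t => f t - g t) x L.
Proof. intros H1 H2 ->. exact (derivable_pt_lim_minus f g x l1 l2 H1 H2). Qed.
Lemma D_mult f g x l1 l2 L : derivable_pt_lim f x l1 -> derivable_pt_lim g x l2 ->
  L = l1 * g x + f x * l2 -> derivable_pt_lim (fun t => f t * g t) x L.
Proof. intros H1 H2 ->. exact (derivable_pt_lim_mult f g x l1 l2 H1 H2). Qed.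
Lemma D_const c x L : L = 0 -> derivable_pt_lim (fun _ => c) x L.
Proof. intros ->. exact (derivable_pt_lim_const c x). Qed.

Lemma dshift g x l : derivable_pt_lim (fun t => g (x + t)) 0 l -> derivable_pt_lim g x l.
Proof.
  intros H eps He. destruct (H eps He) as [d Hd]. exists d. intros h Hh Hhd.
  specialize (Hd h Hh Hhd). rewrite Rplus_0_l, Rplus_0_r in Hd. exact Hd.
Qed.

Lemma dshift' g x l : derivable_pt_lim g x l -> derivable_pt_lim (fun t => g (x + t)) 0 l.
Proof.
  intros H eps He. destruct (H eps He) as [d Hd]. exists d. intros h Hh Hhd.
  rewrite Rplus_0_l, Rplus_0_r. exact (Hd h Hh Hhd).
Qed.

Lemma open_rect U p : open2 U -> U p -> exists e, 0 < e /\
  forall a b, Rabs (a - fst p) < e -> Rabs (b - snd p) < e -> U (a, b).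
Proof.
  intros HU Hp. destruct (HU p Hp) as [e [He H]]. exists e; split; [exact He|].
  intros a b Ha Hb. apply H; simpl; auto.

Qed.

Lemma partial0 U f g a b : has_partial U 0 f g -> U (a, b) ->
  derivable_pt_lim (fun s => f (s, b)) a (g (a, b)).
Proof. intros H Hp. apply dshift. exact (H (a, b) Hp). Qed.
Lemma partial1 U f g a b : has_partial U 1 f g -> U (a, b) ->
  derivable_pt_lim (fun s => f (a, s)) b (g (a, b)).
Proof. intros H Hp. apply dshift. exact (H (a, b) Hp). Qed.

Lemma Rabs_lt_between a b c : a <= c <= b -> Rabs (c - a) <= Rabs (b - a).
Proof. intros. rewrite !Rabs_right; lra. Qed.

Lemma schwarz U f f0 f1 f01 f10 p : open2 U -> U p ->
  has_partial U 0 f f0 -> has_partial U 1 f f1 ->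
  has_partial U 1 f0 f01 -> has_partial U 0 f1 f10 ->
  cont_on U f01 -> cont_on U f10 -> f01 p = f10 p.
Proof.
  intros HU Hp H0 H1 H01 H10 C01 C10.
  destruct p as [x y].
  destruct (open_rect U (x, y) HU Hp) as [e [He HR]]; simpl in HR.
  assert (key : forall h, 0 < h < e -> exists c d c' d',
     x < c < x + h /\ y < d < y + h /\ x < c' < x + h /\ y < d' < y + h /\
     f01 (c, d) = f10 (c', d')).
  { intros h Hh.
    assert (HUr : forall a b, x <= a <= x + h -> y <= b <= y + h -> U (a, b)).
    { intros a b Ha Hb. apply HR; rewrite Rabs_right; lra. }
    destruct (MVT_cor2 (fun s => f (s, y + h) - f (s, y))
                (fun s => f0 (s, y + h) - f0 (s, y)) x (x + h)) as [c [Hc1 Hc2]].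
    { lra. }
    { intros c Hc. eapply D_minus; [apply (partial0 U)|apply (partial0 U)|reflexivity];
        auto; apply HUr; lra. }
    destruct (MVT_cor2 (fun s => f0 (c, s)) (fun s => f01 (c, s)) y (y + h)) as [d [Hd1 Hd2]].
    { lra. }
    { intros d0 Hd. apply (partial1 U); auto. apply HUr; lra. }
    destruct (MVT_cor2 (fun s => f (x + h, s) - f (x, s))
                (fun s => f1 (x + h, s) - f1 (x, s)) y (y + h)) as [d' [Hd1' Hd2']].
    { lra. }
    { intros d0 Hd. eapply D_minus; [apply (partial1 U)|apply (partial1 U)|reflexivity];
        auto; apply HUr; lra. }
    destruct (MVT_cor2 (fun s => f1 (s, d')) (fun s => f10 (s, d')) x (x + h)) as [c' [Hc1' Hc2']].
    { lra. }
    { intros c1 Hc. apply (partial0 U); auto. apply HUr; lra. }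
    exists c, d, c', d'. repeat split; try lra.
    assert (E : f01 (c, d) * h * h = f10 (c', d') * h * h).
    { rewrite Hd1 in Hc1. rewrite Hc1' in Hd1'.
      replace (x + h - x) with h in * by ring. replace (y + h - y) with h in * by ring. lra. }
    apply Rmult_eq_reg_r with (h * h). lra. nra. }
  destruct (Req_dec (f01 (x, y)) (f10 (x, y))) as [Heq|Hne]; auto.
  exfalso.
  set (D := f01 (x, y) - f10 (x, y)).
  assert (HD : 0 < Rabs D) by (apply Rabs_pos_lt; unfold D; lra).
  destruct (C01 (x, y) Hp (Rabs D / 2)) as [d1 [Hd1 C1]]; [lra|].
  destruct (C10 (x, y) Hp (Rabs D / 2)) as [d2 [Hd2 C2]]; [lra|].
  set (h := Rmin e (Rmin d1 d2) / 2).
  assert (Hm1 : Rmin e (Rmin d1 d2) <= e) by apply Rmin_l.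
  assert (Hm2 : Rmin e (Rmin d1 d2) <= d1) by (eapply Rle_trans; [apply Rmin_r|apply Rmin_l]).
  assert (Hm3 : Rmin e (Rmin d1 d2) <= d2) by (eapply Rle_trans; [apply Rmin_r|apply Rmin_r]).
  assert (Hm0 : 0 < Rmin e (Rmin d1 d2)) by (repeat apply Rmin_pos; auto).
  destruct (key h) as [c [d [c' [d' [Ha [Hb [Hc [Hd Heq]]]]]]]]; [unfold h; lra|].
  assert (A1 := C1 (c, d)). assert (A2 := C2 (c', d')). simpl in A1, A2.
  assert (B1 : Rabs (f01 (c, d) - f01 (x, y)) < Rabs D / 2).
  { apply A1; rewrite Rabs_right; unfold h in *; lra. }
  assert (B2 : Rabs (f10 (c', d') - f10 (x, y)) < Rabs D / 2).
  { apply A2; rewrite Rabs_right; unfold h in *; lra. }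
  apply Rabs_def2 in B1. apply Rabs_def2 in B2.
  unfold D in *. destruct (Rcase_abs (f01 (x, y) - f10 (x, y))).
  - rewrite Rabs_left in *; auto; lra.
  - rewrite Rabs_right in *; auto; lra.
Qed.

Lemma D_ext f g x l : (forall t, f t = g t) -> derivable_pt_lim f x l -> derivable_pt_lim g x l.
Proof.
  intros E H eps He. destruct (H eps He) as [d Hd]. exists d. intros h Hh Hhd.
  rewrite <- !E. auto.
Qed.

Lemma dcont g l : derivable_pt_lim g 0 l -> forall e, 0 < e -> exists d, 0 < d /\
  forall h, Rabs h < d -> Rabs (g h - g 0) < e.
Proof.
  intros H e He.
  assert (C := derivable_continuous_pt g 0 (exist _ l H)).
  destruct (C e He) as [a [Ha Hc]]. exists a; split; auto.
  intros h Hh. destruct (Req_dec h 0) as [->|Hn].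
  - rewrite Rminus_diag, Rabs_R0; auto.
  - apply (Hc h). split. split; [exact I|auto].
    simpl. unfold R_dist. replace (h - 0) with h by ring; auto.
Qed.

Lemma mvt_gen (phi phi' : R -> R) u v :
  (forall c, Rabs (c - u) <= Rabs (v - u) -> derivable_pt_lim phi c (phi' c)) ->
  exists xi, Rabs (xi - u) <= Rabs (v - u) /\ phi v - phi u = phi' xi * (v - u).
Proof.
  intros H. destruct (Rtotal_order u v) as [Hl|[He|Hg]].
  - destruct (MVT_cor2 phi phi' u v Hl) as [c [E Hc]].
    { intros c Hc. apply H. rewrite !Rabs_right; lra. }
    exists c. split; auto. rewrite !Rabs_right; lra.
  - subst. exists v. split. lra. ring.
  - destruct (MVT_cor2 phi phi' v u Hg) as [c [E Hc]].
    { intros c Hc. apply H. rewrite !Rabs_left1; lra. }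
    exists c. split. rewrite !Rabs_left1; lra. lra.
Qed.

Lemma chain V f g0 g1 q (ga gb : R -> R) d1 d2 :
  open2 V -> V q -> has_partial V 0 f g0 -> has_partial V 1 f g1 -> cont_on V g0 ->
  derivable_pt_lim ga 0 d1 -> derivable_pt_lim gb 0 d2 -> ga 0 = fst q -> gb 0 = snd q ->
  derivable_pt_lim (fun t => f (ga t, gb t)) 0 (g0 q * d1 + g1 q * d2).
Proof.
  intros HV Hq H0 H1 C0 Da Db Ea Eb.
  destruct q as [x0 y0]. simpl in Ea, Eb.
  destruct (open_rect V (x0, y0) HV Hq) as [eV [HeV HR]]; simpl in HR.
  assert (HB : derivable_pt_lim (fun t => f (x0, gb t)) 0 (g1 (x0, y0) * d2)).
  { assert (P := partial1 V f g1 x0 y0 H1 Hq). pattern y0 at 1 in P. rewrite <- Eb in P.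
    exact (derivable_pt_lim_comp gb (fun s => f (x0, s)) 0 d2 _ Db P). }
  assert (HA : derivable_pt_lim (fun t => f (ga t, gb t) - f (x0, gb t)) 0 (g0 (x0, y0) * d1)).
  { intros eps Heps.
    set (K := Rabs (g0 (x0, y0)) + 1).
    assert (HK : 0 < K) by (unfold K; generalize (Rabs_pos (g0 (x0, y0))); lra).
    set (e1 := Rmin 1 (eps / (2 * (Rabs d1 + 1)))).
    assert (Hd1p : 0 < Rabs d1 + 1) by (generalize (Rabs_pos d1); lra).
    assert (He1 : 0 < e1) by (unfold e1; apply Rmin_pos; [lra| apply Rdiv_lt_0_compat; lra]).
    destruct (C0 (x0, y0) Hq e1 He1) as [dc [Hdc Cc]]. simpl in Cc.
    set (d' := Rmin eV dc).
    assert (Hd' : 0 < d') by (unfold d'; apply Rmin_pos; auto).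
    destruct (dcont ga d1 Da d' Hd') as [da [Hda Ca]].
    destruct (dcont gb d2 Db d' Hd') as [db [Hdb Cb]].
    assert (He2 : 0 < eps / (2 * K)) by (apply Rdiv_lt_0_compat; lra).
    destruct (Da _ He2) as [dd Hdd].
    assert (Hdd0 := cond_pos dd).
    assert (Hdel : 0 < Rmin da (Rmin db dd)) by (repeat apply Rmin_pos; auto).
    exists (mkposreal _ Hdel). simpl. intros h Hh Hhd.
    assert (Hm1 : Rmin da (Rmin db dd) <= da) by apply Rmin_l.
    assert (Hm2 : Rmin da (Rmin db dd) <= db) by (eapply Rle_trans; [apply Rmin_r|apply Rmin_l]).
    assert (Hm3 : Rmin da (Rmin db dd) <= dd) by (eapply Rle_trans; [apply Rmin_r|apply Rmin_r]).
    assert (Hn1 : d' <= eV) by apply Rmin_l. assert (Hn2 : d' <= dc) by apply Rmin_r.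
    specialize (Hdd h Hh ltac:(lra)). rewrite Rplus_0_l, Ea in Hdd.
    assert (Ha := Ca h ltac:(lra)). assert (Hb := Cb h ltac:(lra)).
    rewrite Ea in Ha. rewrite Eb in Hb.
    destruct (mvt_gen (fun s => f (s, gb h)) (fun s => g0 (s, gb h)) x0 (ga h)) as [xi [Hxi E]].
    { intros c Hc. apply (partial0 V); auto. apply HR; lra. }
    rewrite Rplus_0_l, Ea, Eb. rewrite Rminus_diag, Rminus_0_r.
    rewrite E.
    assert (Hu : Rabs (g0 (xi, gb h) - g0 (x0, y0)) < e1) by (apply Cc; simpl; lra).
    set (u := g0 (xi, gb h) - g0 (x0, y0)) in *.
    set (w := (ga h - x0) / h - d1) in *.
    replace (g0 (xi, gb h) * (ga h - x0) / h - g0 (x0, y0) * d1)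
      with ((g0 (x0, y0) + u) * w + u * d1)
      by (unfold u, w; field; auto).
    eapply Rle_lt_trans; [apply Rabs_triang|].
    rewrite !Rabs_mult.
    assert (T1 : Rabs (g0 (x0, y0) + u) <= K).
    { unfold K. eapply Rle_trans; [apply Rabs_triang|].
      assert (e1 <= 1) by apply Rmin_l. lra. }
    assert (T2 : e1 <= eps / (2 * (Rabs d1 + 1))) by apply Rmin_r.
    assert (T3 : e1 * Rabs d1 < eps / 2).
    { apply Rle_lt_trans with (eps / (2 * (Rabs d1 + 1)) * Rabs d1).
      apply Rmult_le_compat_r; [apply Rabs_pos|auto].
      apply Rmult_lt_reg_r with (2 * (Rabs d1 + 1)). lra.
      field_simplify; try lra. }
    assert (T4 : K * (eps / (2 * K)) = eps / 2) by (field; lra).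
    assert (T5 : Rabs (g0 (x0, y0) + u) * Rabs w <= K * (eps / (2 * K))).
    { apply Rmult_le_compat; auto using Rabs_pos; lra. }
    assert (T6 : Rabs u * Rabs d1 <= e1 * Rabs d1).
    { apply Rmult_le_compat_r; [apply Rabs_pos| lra]. }
    lra. }
  assert (S := D_plus _ _ 0 _ _ _ HA HB eq_refl).
  eapply D_ext; [|exact S]. intros t. simpl. ring.
Qed.

Lemma D_plus' f g x l1 l2 : derivable_pt_lim f x l1 -> derivable_pt_lim g x l2 ->
  derivable_pt_lim (fun t => f t + g t) x (l1 + l2).
Proof. intros. eapply D_plus; eauto. Qed.
Lemma D_minus' f g x l1 l2 : derivable_pt_lim f x l1 -> derivable_pt_lim g x l2 ->
  derivable_pt_lim (fun t => f t - g t) x (l1 - l2).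
Proof. intros. eapply D_minus; eauto. Qed.
Lemma D_mult' f g x l1 l2 : derivable_pt_lim f x l1 -> derivable_pt_lim g x l2 ->
  derivable_pt_lim (fun t => f t * g t) x (l1 * g x + f x * l2).
Proof. intros. eapply D_mult; eauto. Qed.
Lemma D_const' c x : derivable_pt_lim (fun _ => c) x 0.
Proof. eapply D_const; eauto. Qed.
Lemma D_val f x l L : derivable_pt_lim f x l -> l = L -> derivable_pt_lim f x L.
Proof. intros H ->; auto. Qed.

Ltac dtac H :=
  match goal with
  | |- derivable_pt_lim (fun t => ?c) _ _ => apply D_const'
  | |- derivable_pt_lim (fun t => _ + _) _ _ => eapply D_plus'; [dtac H|dtac H]
  | |- derivable_pt_lim (fun t => _ - _) _ _ => eapply D_minus'; [dtac H|dtac H]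
  | |- derivable_pt_lim (fun t => _ * _) _ _ => eapply D_mult'; [dtac H|dtac H]
  | _ => eapply H; lia
  end.

Definition Fp G Gt (J:nat->nat->R) i j k := sum2 (fun l => Gam G i j l * J k l) - sum2 (fun b => sum2 (fun a => Gam Gt b a k * J b i * J a j)).
Definition dFp G Gt (J Jd:nat->nat->R) i j k := sum2 (fun l => Gam G i j l * Jd k l) - sum2 (fun b => sum2 (fun a => Gam Gt b a k * (Jd b i * J a j + J b i * Jd a j))).
Definition Qp G Gt J j k := dFp G Gt J (fun a b => Fp G Gt J 1 b a) 0 j k - dFp G Gt J (fun a b => Fp G Gt J 0 b a) 1 j k.
Definition detJ (J:nat->nat->R) := J 0%nat 0%nat * J 1%nat 1%nat - J 0%nat 1%nat * J 1%nat 0%nat.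
Definition rt Gt (J:nat->nat->R) i j := sum2 (fun b => sum2 (fun a => ric Gt b a * J b i * J a j)).
Definition drt Gt (J Jd:nat->nat->R) j k := sum2 (fun b => sum2 (fun a => ric Gt b a * (Jd b j * J a k + J b j * Jd a k))).
Definition E G Gt J i j k := sum2 (fun a => sum2 (fun b => ric Gt b a * Fp G Gt J i j b) * J a k).

Lemma lt2 n : (n < 2)%nat -> n = 0%nat \/ n = 1%nat.
Proof. lia. Qed.

Lemma DFp G Gt (Jt : R -> nat -> nat -> R) Jd i j k : (i<2)%nat -> (j<2)%nat -> (k<2)%nat ->
  (forall a b, (a<2)%nat -> (b<2)%nat -> derivable_pt_lim (fun t => Jt t a b) 0 (Jd a b)) ->
  derivable_pt_lim (fun t => Fp G Gt (Jt t) i j k) 0 (dFp G Gt (Jt 0) Jd i j k).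
Proof.
  intros Hi Hj Hk H. destruct G, Gt.
  destruct (lt2 i Hi) as [->| ->]; destruct (lt2 j Hj) as [->| ->]; destruct (lt2 k Hk) as [->| ->];
  unfold Fp, dFp, sum2, Gam; simpl; (eapply D_val; [dtac H|]); cbv beta; ring.
Qed.

Lemma Drt Gt (Jt : R -> nat -> nat -> R) Jd j k : (j<2)%nat -> (k<2)%nat ->
  (forall a b, (a<2)%nat -> (b<2)%nat -> derivable_pt_lim (fun t => Jt t a b) 0 (Jd a b)) ->
  derivable_pt_lim (fun t => rt Gt (Jt t) j k) 0 (drt Gt (Jt 0) Jd j k).
Proof.
  intros Hj Hk H. destruct Gt.
  destruct (lt2 j Hj) as [->| ->]; destruct (lt2 k Hk) as [->| ->];
  unfold rt, drt, ric, Rc, sum2, Gam; simpl; (eapply D_val; [dtac H|]); cbv beta; ring.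
Qed.

Lemma C_const U c : cont_on U (fun _ => c).
Proof. intros p Hp eps He. exists 1; split; [lra|]. intros. rewrite Rminus_diag, Rabs_R0; auto. Qed.

Lemma C_plus U f g : cont_on U f -> cont_on U g -> cont_on U (fun x => f x + g x).
Proof.
  intros Cf Cg p Hp eps He.
  destruct (Cf p Hp (eps/2)) as [d1 [Hd1 H1]]; [lra|].
  destruct (Cg p Hp (eps/2)) as [d2 [Hd2 H2]]; [lra|].
  exists (Rmin d1 d2); split; [apply Rmin_pos; auto|].
  intros q Hq1 Hq2.
  assert (A := H1 q ltac:(eapply Rlt_le_trans; [exact Hq1|apply Rmin_l])
                    ltac:(eapply Rlt_le_trans; [exact Hq2|apply Rmin_l])).
  assert (B := H2 q ltac:(eapply Rlt_le_trans; [exact Hq1|apply Rmin_r])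
                    ltac:(eapply Rlt_le_trans; [exact Hq2|apply Rmin_r])).
  replace (f q + g q - (f p + g p)) with ((f q - f p) + (g q - g p)) by ring.
  eapply Rle_lt_trans; [apply Rabs_triang|]. lra.
Qed.

Lemma C_opp U f : cont_on U f -> cont_on U (fun x => - f x).
Proof.
  intros Cf p Hp eps He. destruct (Cf p Hp eps He) as [d [Hd H]]. exists d; split; auto.
  intros q A B. replace (- f q - - f p) with (- (f q - f p)) by ring. rewrite Rabs_Ropp. auto.
Qed.

Lemma C_minus U f g : cont_on U f -> cont_on U g -> cont_on U (fun x => f x - g x).
Proof. intros. apply (C_plus U f (fun x => - g x)); auto. apply C_opp; auto. Qed.

Lemma C_mult U f g : cont_on U f -> cont_on U g -> cont_on U (fun x => f x * g x).
Proof.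
  intros Cf Cg p Hp eps He.
  set (a := f p). set (b := g p).
  assert (Ha : 0 < Rabs a + 1) by (generalize (Rabs_pos a); lra).
  assert (Hb : 0 < Rabs b + 1) by (generalize (Rabs_pos b); lra).
  set (ef := Rmin 1 (eps / (2 * (Rabs b + 1)))).
  assert (Hef : 0 < ef) by (unfold ef; apply Rmin_pos; [lra|apply Rdiv_lt_0_compat; lra]).
  assert (Heg : 0 < eps / (2 * (Rabs a + 1))) by (apply Rdiv_lt_0_compat; lra).
  destruct (Cf p Hp ef Hef) as [d1 [Hd1 H1]].
  destruct (Cg p Hp _ Heg) as [d2 [Hd2 H2]].
  exists (Rmin d1 d2); split; [apply Rmin_pos; auto|].
  intros q Hq1 Hq2.
  assert (A := H1 q ltac:(eapply Rlt_le_trans; [exact Hq1|apply Rmin_l])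
                    ltac:(eapply Rlt_le_trans; [exact Hq2|apply Rmin_l])).
  assert (B := H2 q ltac:(eapply Rlt_le_trans; [exact Hq1|apply Rmin_r])
                    ltac:(eapply Rlt_le_trans; [exact Hq2|apply Rmin_r])).
  fold a b in A, B |- *.
  replace (f q * g q - a * b) with (f q * (g q - b) + b * (f q - a)) by ring.
  eapply Rle_lt_trans; [apply Rabs_triang|]. rewrite !Rabs_mult.
  assert (T1 : Rabs (f q) <= Rabs a + 1).
  { replace (f q) with (a + (f q - a)) by ring. eapply Rle_trans; [apply Rabs_triang|].
    assert (ef <= 1) by apply Rmin_l. lra. }
  assert (T2 : ef <= eps / (2 * (Rabs b + 1))) by apply Rmin_r.
  assert (T3 : Rabs (f q) * Rabs (g q - b) <= (Rabs a + 1) * (eps / (2 * (Rabs a + 1)))).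
  { apply Rmult_le_compat; auto using Rabs_pos; lra. }
  assert (T4 : (Rabs a + 1) * (eps / (2 * (Rabs a + 1))) = eps / 2) by (field; lra).
  assert (T5 : Rabs b * Rabs (f q - a) <= Rabs b * ef).
  { apply Rmult_le_compat_l; [apply Rabs_pos|lra]. }
  assert (T6 : Rabs b * ef < eps / 2).
  { apply Rle_lt_trans with (Rabs b * (eps / (2 * (Rabs b + 1)))).
    apply Rmult_le_compat_l; [apply Rabs_pos|auto].
    apply Rmult_lt_reg_r with (2 * (Rabs b + 1)). lra.
    field_simplify; try lra. }
  lra.
Qed.

Ltac ctac H :=
  match goal with
  | |- cont_on _ (fun x => ?c) => apply C_const
  | |- cont_on _ (fun x => _ + _) => eapply C_plus; [ctac H|ctac H]
  | |- cont_on _ (fun x => _ - _) => eapply C_minus; [ctac H|ctac H]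
  | |- cont_on _ (fun x => _ * _) => eapply C_mult; [ctac H|ctac H]
  | _ => eapply H; lia
  end.

Lemma t0 G Gt J j : detJ J * (ric G 0 j - rt Gt J 0 j) = (- J 1%nat 0%nat * Qp G Gt J j 0 + J 0%nat 0%nat * Qp G Gt J j 1).
Proof. destruct G, Gt; destruct j as [|[|]]; unfold Qp, dFp, Fp, detJ, rt, ric, Rc, sum2, Gam; simpl; ring. Qed.
Lemma t1 G Gt J j : detJ J * (ric G 1 j - rt Gt J 1 j) = - (J 1%nat 1%nat * Qp G Gt J j 0 - J 0%nat 1%nat * Qp G Gt J j 1).
Proof. destruct G, Gt; destruct j as [|[|]]; unfold Qp, dFp, Fp, detJ, rt, ric, Rc, sum2, Gam; simpl; ring. Qed.
Lemma drtE G Gt J i j k : drt Gt J (fun a b => Fp G Gt J i b a) j k = E G Gt J i j k + E G Gt J i k j.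
Proof. destruct G, Gt; unfold drt, E, Fp, ric, Rc, sum2, Gam; simpl; ring. Qed.
Lemma Esym G Gt J i j k : E G Gt J i j k = E G Gt J j i k.
Proof. destruct G, Gt; destruct i as [|[|]]; destruct j as [|[|]]; unfold E, Fp, sum2, Gam; simpl; ring. Qed.

Lemma zero_of x d : d <> 0 -> x * d = 0 -> x = 0.
Proof. intros Hd H. destruct (Rmult_integral _ _ H); auto. contradiction. Qed.

Lemma alg1 G Gt J : detJ J <> 0 ->
  (forall j k, (j<2)%nat -> (k<2)%nat -> Qp G Gt J j k = 0) ->
  forall i j, (i<2)%nat -> (j<2)%nat -> ric G i j = rt Gt J i j.
Proof.
  intros Hd HQ i j Hi Hj.
  assert (Q0 := HQ j 0%nat Hj ltac:(lia)). assert (Q1 := HQ j 1%nat Hj ltac:(lia)).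
  destruct (lt2 i Hi) as [->| ->].
  - assert (T := t0 G Gt J j). rewrite Q0, Q1 in T.
    apply Rminus_diag_uniq. apply (zero_of _ (detJ J) Hd). rewrite Rmult_comm, T. ring.
  - assert (T := t1 G Gt J j). rewrite Q0, Q1 in T.
    apply Rminus_diag_uniq. apply (zero_of _ (detJ J) Hd). rewrite Rmult_comm, T. ring.
Qed.

Lemma alg2 G Gt J : detJ J <> 0 -> ric_nondegenerate Gt ->
  (forall i j k, (i<2)%nat -> (j<2)%nat -> (k<2)%nat -> drt Gt J (fun a b => Fp G Gt J i b a) j k = 0) ->
  forall i j k, (i<2)%nat -> (j<2)%nat -> (k<2)%nat -> Fp G Gt J i j k = 0.
Proof.
  intros Hd Hn H.
  assert (HE : forall i j k, (i<2)%nat -> (j<2)%nat -> (k<2)%nat -> E G Gt J i j k + E G Gt J i k j = 0).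
  { intros. rewrite <- drtE. auto. }
  assert (HE0 : forall i j k, (i<2)%nat -> (j<2)%nat -> (k<2)%nat -> E G Gt J i j k = 0).
  { assert (e000 := HE 0%nat 0%nat 0%nat ltac:(lia) ltac:(lia) ltac:(lia)).
    assert (e001 := HE 0%nat 0%nat 1%nat ltac:(lia) ltac:(lia) ltac:(lia)).
    assert (e011 := HE 0%nat 1%nat 1%nat ltac:(lia) ltac:(lia) ltac:(lia)).
    assert (e100 := HE 1%nat 0%nat 0%nat ltac:(lia) ltac:(lia) ltac:(lia)).
    assert (e101 := HE 1%nat 0%nat 1%nat ltac:(lia) ltac:(lia) ltac:(lia)).
    assert (e111 := HE 1%nat 1%nat 1%nat ltac:(lia) ltac:(lia) ltac:(lia)).
    assert (s1 := Esym G Gt J 0%nat 1%nat 0%nat).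
    assert (s2 := Esym G Gt J 0%nat 1%nat 1%nat).
    intros i j k Hi Hj Hk.
    destruct (lt2 i Hi) as [->| ->]; destruct (lt2 j Hj) as [->| ->]; destruct (lt2 k Hk) as [->| ->]; lra. }
  intros i j k Hi Hj Hk.
  assert (E0 := HE0 i j 0%nat Hi Hj ltac:(lia)). assert (E1 := HE0 i j 1%nat Hi Hj ltac:(lia)).
  set (u0 := sum2 (fun b => ric Gt b 0 * Fp G Gt J i j b)).
  set (u1 := sum2 (fun b => ric Gt b 1 * Fp G Gt J i j b)).
  assert (U0 : u0 = 0).
  { apply (zero_of _ (detJ J) Hd).
    replace (u0 * detJ J) with (J 1%nat 1%nat * E G Gt J i j 0 - J 1%nat 0%nat * E G Gt J i j 1)
      by (unfold u0, E, detJ, sum2; ring). rewrite E0, E1; ring. }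
  assert (U1 : u1 = 0).
  { apply (zero_of _ (detJ J) Hd).
    replace (u1 * detJ J) with (J 0%nat 0%nat * E G Gt J i j 1 - J 0%nat 1%nat * E G Gt J i j 0)
      by (unfold u1, E, detJ, sum2; ring). rewrite E0, E1; ring. }
  unfold ric_nondegenerate in Hn.
  destruct (lt2 k Hk) as [->| ->].
  - apply (zero_of _ _ Hn).
    replace (Fp G Gt J i j 0 * (ric Gt 0 0 * ric Gt 1 1 - ric Gt 0 1 * ric Gt 1 0))
      with (ric Gt 1 1 * u0 - ric Gt 1 0 * u1) by (unfold u0, u1, sum2; ring).
    rewrite U0, U1; ring.
  - apply (zero_of _ _ Hn).
    replace (Fp G Gt J i j 1 * (ric Gt 0 0 * ric Gt 1 1 - ric Gt 0 1 * ric Gt 1 0))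
      with (ric Gt 0 0 * u1 - ric Gt 0 1 * u0) by (unfold u0, u1, sum2; ring).
    rewrite U0, U1; ring.
Qed.

Definition Jof (dT : nat -> nat -> pt -> R) (x : pt) : nat -> nat -> R := fun a b => dT a b x.

Lemma shift0 i p : shift i p 0 = p.
Proof. destruct p, i; simpl; rewrite Rplus_0_r; auto. Qed.

Lemma shift_in U p : open2 U -> U p -> exists e, 0 < e /\ forall i t, Rabs t < e -> U (shift i p t).
Proof.
  intros HU Hp. destruct (HU p Hp) as [e [He H]]. exists e; split; auto.
  intros i t Ht. destruct i; apply H; simpl;
  try (replace (fst p + t - fst p) with t by ring); try (replace (snd p + t - snd p) with t by ring);
  try (rewrite Rminus_diag, Rabs_R0); auto.
Qed.

Lemma D_local f g l d : 0 < d -> (forall t, Rabs t < d -> f t = g t) ->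
  derivable_pt_lim f 0 l -> derivable_pt_lim g 0 l.
Proof.
  intros Hd E H eps He. destruct (H eps He) as [del Hdel].
  assert (Hp : 0 < Rmin del d) by (apply Rmin_pos; auto; apply cond_pos).
  exists (mkposreal _ Hp). simpl. intros h Hh Hhd.
  rewrite <- !E. apply Hdel; auto.
  eapply Rlt_le_trans; [exact Hhd|apply Rmin_l].
  rewrite Rabs_R0; auto.
  rewrite Rplus_0_l. eapply Rlt_le_trans; [exact Hhd|apply Rmin_r].
Qed.

Lemma loc_const f c l d : 0 < d -> (forall t, Rabs t < d -> f t = c) ->
  derivable_pt_lim f 0 l -> l = 0.
Proof.
  intros Hd E H. apply (uniqueness_limite (fun _ => c) 0).
  - apply (D_local f _ l d); auto.
  - apply D_const'.
Qed.

Lemma cont_eq U g h : open2 U -> cont_on U h -> (forall x, U x -> g x = h x) -> cont_on U g.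
Proof.
  intros HU C E p Hp eps He.
  destruct (C p Hp eps He) as [d [Hd H]]. destruct (HU p Hp) as [e [He' HE]].
  exists (Rmin d e); split; [apply Rmin_pos; auto|].
  intros q A B.
  rewrite !E; auto.
  apply H; (eapply Rlt_le_trans; [eassumption|apply Rmin_l]).
  apply HE; (eapply Rlt_le_trans; [eassumption|apply Rmin_r]).
Qed.

Lemma cont_partial U f g i : open2 U -> smooth_on U f -> has_partial U i f g -> (i < 2)%nat -> cont_on U g.
Proof.
  intros HU Hs Hg Hi.
  destruct (Hs 1%nat) as [_ [g0 [g1 [P0 [P1 [C0 C1]]]]]]. simpl in C0, C1.
  destruct (lt2 i Hi) as [->| ->].
  - apply (cont_eq U g g0); auto. intros x Hx. eapply uniqueness_limite; [apply Hg|apply P0]; auto.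
  - apply (cont_eq U g g1); auto. intros x Hx. eapply uniqueness_limite; [apply Hg|apply P1]; auto.
Qed.

Lemma diffeo_det U V T S dT x :
  open2 U -> open2 V -> (forall p, U p -> V (T p)) -> smooth_map_on V S ->
  (forall p, U p -> S (T p) = p) ->
  (forall k i, (k < 2)%nat -> (i < 2)%nat -> has_partial U i (fun p => coord k (T p)) (dT k i)) ->
  U x -> detJ (Jof dT x) <> 0.
Proof.
  intros HU HV HTV [SS1 SS2] HST HdT Hx.
  destruct (SS1 1%nat) as [_ [g0 [g1 [P0 [P1 [C0 _]]]]]].
  destruct (SS2 1%nat) as [_ [h0 [h1 [Q0 [Q1 [D0 _]]]]]].
  simpl in C0, D0.
  destruct (shift_in U x HU Hx) as [e [He Hsh]].
  assert (K : forall (F : pt -> R) f0 f1 i, (i < 2)%nat -> has_partial V 0 F f0 -> has_partial V 1 F f1 ->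
     cont_on V f0 -> derivable_pt_lim (fun t => F (fst (T (shift i x t)), snd (T (shift i x t)))) 0
        (f0 (T x) * dT 0%nat i x + f1 (T x) * dT 1%nat i x)).
  { intros F f0 f1 i Hi HF0 HF1 CF0.
    apply (chain V F f0 f1 (T x)); auto.
    - exact (HdT 0%nat i ltac:(lia) Hi x Hx).
    - exact (HdT 1%nat i ltac:(lia) Hi x Hx).
    - rewrite shift0; auto.
    - rewrite shift0; auto. }
  assert (Hfun : forall i t, Rabs t < e -> S (fst (T (shift i x t)), snd (T (shift i x t))) = shift i x t).
  { intros i t Ht. rewrite <- surjective_pairing. apply HST. apply Hsh; auto. }
  assert (Did : derivable_pt_lim (fun t => fst x + t) 0 1).
  { eapply D_val; [apply D_plus'; [apply D_const'| apply derivable_pt_lim_id]|ring]. }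
  assert (Did2 : derivable_pt_lim (fun t => snd x + t) 0 1).
  { eapply D_val; [apply D_plus'; [apply D_const'| apply derivable_pt_lim_id]|ring]. }
  assert (e00 : g0 (T x) * dT 0%nat 0%nat x + g1 (T x) * dT 1%nat 0%nat x = 1).
  { eapply uniqueness_limite. apply (K (fun q => fst (S q))); auto.
    apply (D_local (fun t => fst x + t) _ 1 e); auto. intros t Ht. rewrite Hfun; auto. }
  assert (e01 : g0 (T x) * dT 0%nat 1%nat x + g1 (T x) * dT 1%nat 1%nat x = 0).
  { eapply uniqueness_limite. apply (K (fun q => fst (S q))); auto.
    apply (D_local (fun t => fst x) _ 0 e); auto. intros t Ht. rewrite Hfun; auto. apply D_const'. }
  assert (e10 : h0 (T x) * dT 0%nat 0%nat x + h1 (T x) * dT 1%nat 0%nat x = 0).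
  { eapply uniqueness_limite. apply (K (fun q => snd (S q))); auto.
    apply (D_local (fun t => snd x) _ 0 e); auto. intros t Ht. rewrite Hfun; auto. apply D_const'. }
  assert (e11 : h0 (T x) * dT 0%nat 1%nat x + h1 (T x) * dT 1%nat 1%nat x = 1).
  { eapply uniqueness_limite. apply (K (fun q => snd (S q))); auto.
    apply (D_local (fun t => snd x + t) _ 1 e); auto. intros t Ht. rewrite Hfun; auto. }
  intro H0. unfold detJ, Jof in H0.
  assert (I : (g0 (T x) * h1 (T x) - g1 (T x) * h0 (T x)) *
     (dT 0%nat 0%nat x * dT 1%nat 1%nat x - dT 0%nat 1%nat x * dT 1%nat 0%nat x) =
     (g0 (T x) * dT 0%nat 0%nat x + g1 (T x) * dT 1%nat 0%nat x) * (h0 (T x) * dT 0%nat 1%nat x + h1 (T x) * dT 1%nat 1%nat x)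
     - (g0 (T x) * dT 0%nat 1%nat x + g1 (T x) * dT 1%nat 1%nat x) * (h0 (T x) * dT 0%nat 0%nat x + h1 (T x) * dT 1%nat 0%nat x))
    by ring.
  rewrite e00, e01, e10, e11, H0 in I. lra.
Qed.

Lemma aff_to_lin G Gt : ric_nondegenerate Gt -> affinely_equivalent G Gt -> linearly_equivalent G Gt.
Proof.
  intros HGt [U [V [T [[p Hp] [HD [dT [ddT [HdT [HddT Hpb]]]]]]]]].
  destruct HD as [HU [HV [HTV [HsT [S [HSU [HST [HTS HsS]]]]]]]].
  assert (F1 : forall x, U x -> forall i a b, (i<2)%nat -> (a<2)%nat -> (b<2)%nat ->
            ddT a b i x = Fp G Gt (Jof dT x) i b a).
  { intros x Hx i a b Hi Ha Hb. assert (P := Hpb x Hx i b a Hi Hb Ha).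
    unfold pullback_eq in P. unfold Fp, Jof. lra. }
  assert (F2 : forall x, U x -> detJ (Jof dT x) <> 0).
  { intros x Hx. apply (diffeo_det U V T S dT x); auto. }
  assert (Hc : forall a b, (a<2)%nat -> (b<2)%nat -> cont_on U (dT a b)).
  { intros a b Ha Hb. destruct HsT as [T1 T2].
    destruct (lt2 a Ha) as [->| ->].
    - apply (cont_partial U (fun p => fst (T p)) _ b); auto. exact (HdT 0%nat b Ha Hb).
    - apply (cont_partial U (fun p => snd (T p)) _ b); auto. exact (HdT 1%nat b Ha Hb). }
  assert (DJ : forall x, U x -> forall i, (i<2)%nat -> forall a b, (a<2)%nat -> (b<2)%nat ->
     derivable_pt_lim (fun t => Jof dT (shift i x t) a b) 0 (Fp G Gt (Jof dT x) i b a)).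
  { intros x Hx i Hi a b Ha Hb. unfold Jof at 1. rewrite <- F1; auto. apply HddT; auto. }
  assert (F3 : forall x, U x -> forall j k, (j<2)%nat -> (k<2)%nat -> Qp G Gt (Jof dT x) j k = 0).
  { intros x Hx j k Hj Hk. unfold Qp. apply Rminus_diag_eq.
    apply (schwarz U (dT k j) (fun x => Fp G Gt (Jof dT x) 0 j k) (fun x => Fp G Gt (Jof dT x) 1 j k)
            (fun x => dFp G Gt (Jof dT x) (fun a b => Fp G Gt (Jof dT x) 1 b a) 0 j k)
            (fun x => dFp G Gt (Jof dT x) (fun a b => Fp G Gt (Jof dT x) 0 b a) 1 j k)); auto.
    - intros y Hy. rewrite <- F1; auto. apply HddT; auto.
    - intros y Hy. rewrite <- F1; auto. apply HddT; auto.
    - intros y Hy. eapply D_val.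
      + apply (DFp G Gt (fun t => Jof dT (shift 1 y t))); auto. intros; apply DJ; auto.
      + rewrite shift0; reflexivity.
    - intros y Hy. eapply D_val.
      + apply (DFp G Gt (fun t => Jof dT (shift 0 y t))); auto. intros; apply DJ; auto.
      + rewrite shift0; reflexivity.
    - destruct G, Gt. destruct (lt2 j Hj) as [->| ->]; destruct (lt2 k Hk) as [->| ->];
      unfold dFp, Fp, Jof, sum2, Gam; simpl; ctac Hc.
    - destruct G, Gt. destruct (lt2 j Hj) as [->| ->]; destruct (lt2 k Hk) as [->| ->];
      unfold dFp, Fp, Jof, sum2, Gam; simpl; ctac Hc. }
  assert (F4 : forall x, U x -> forall i j, (i<2)%nat -> (j<2)%nat -> rt Gt (Jof dT x) i j = ric G i j).
  { intros x Hx i j Hi Hj. symmetry. apply alg1; auto. }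
  destruct (shift_in U p HU Hp) as [e [He Hsh]].
  assert (F5 : forall i j k, (i<2)%nat -> (j<2)%nat -> (k<2)%nat ->
       drt Gt (Jof dT p) (fun a b => Fp G Gt (Jof dT p) i b a) j k = 0).
  { intros i j k Hi Hj Hk.
    apply (loc_const (fun t => rt Gt (Jof dT (shift i p t)) j k) (ric G j k) _ e); [exact He| |].
    - intros t Ht. apply F4; auto.
    - eapply D_val.
      + apply (Drt Gt (fun t => Jof dT (shift i p t))); auto. intros; apply DJ; auto.
      + rewrite shift0; reflexivity. }
  assert (F6 := alg2 G Gt (Jof dT p) (F2 p Hp) HGt F5).
  exists (fun a b => dT a b p). split.
  - exact (F2 p Hp).
  - intros i j k Hi Hj Hk. specialize (F6 i j k Hi Hj Hk). unfold Fp, Jof in F6.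
    unfold pullback_eq. lra.
Qed.

Lemma D_id x : derivable_pt_lim (fun t => t) x 1.
Proof. exact (derivable_pt_lim_id x). Qed.

Lemma D_lin1 a c e x : derivable_pt_lim (fun t => a * (c + t) + e) x a.
Proof.
  eapply D_val.
  apply (D_plus' (fun t => a * (c + t)) (fun _ => e)).
  apply (D_mult' (fun _ => a) (fun t => c + t)). apply D_const'.
  apply (D_plus' (fun _ => c) (fun t => t)). apply D_const'. apply D_id. apply D_const'.
  ring.
Qed.
Lemma D_lin2 a c e x : derivable_pt_lim (fun t => e + a * (c + t)) x a.
Proof.
  eapply D_val.
  apply (D_plus' (fun _ => e) (fun t => a * (c + t))). apply D_const'.
  apply (D_mult' (fun _ => a) (fun t => c + t)). apply D_const'.
  apply (D_plus' (fun _ => c) (fun t => t)). apply D_const'. apply D_id.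
  ring.
Qed.

Lemma Ck_const U n c : Ck n U (fun _ => c).
Proof.
  revert c; induction n; intros c; simpl.
  - apply C_const.
  - split; [apply C_const|]. exists (fun _ => 0), (fun _ => 0).
    repeat split; auto; intros p _; apply D_const'.
Qed.

Lemma C_fst U : cont_on U (fun p => fst p).
Proof. intros p _ eps He. exists eps; split; auto. Qed.
Lemma C_snd U : cont_on U (fun p => snd p).
Proof. intros p _ eps He. exists eps; split; auto. Qed.

Lemma smooth_lin U a b : smooth_on U (fun p => a * fst p + b * snd p).
Proof.
  intros n. destruct n; simpl.
  - apply C_plus; apply C_mult; auto using C_const, C_fst, C_snd.
  - split. apply C_plus; apply C_mult; auto using C_const, C_fst, C_snd.
    exists (fun _ => a), (fun _ => b). repeat split; auto using Ck_const.
    + intros p _. simpl. eapply D_val; [first [apply D_lin1|apply D_lin2]|]; ring.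
    + intros p _. simpl. eapply D_val; [first [apply D_lin1|apply D_lin2]|]; ring.
Qed.

Lemma Ck_ext U n f g : (forall p, f p = g p) -> Ck n U g -> Ck n U f.
Proof.
  revert f g; induction n; intros f g E H; simpl in *.
  - intros p Hp eps He. destruct (H p Hp eps He) as [d [Hd Hq]]. exists d; split; auto.
    intros. rewrite !E; auto.
  - destruct H as [C [g0 [g1 [P0 [P1 [C0 C1]]]]]]. split.
    + intros p Hp eps He. destruct (C p Hp eps He) as [d [Hd Hq]]. exists d; split; auto.
      intros. rewrite !E; auto.
    + exists g0, g1. repeat split; auto.
      * intros p Hp. apply (D_ext (fun t => g (shift 0 p t))); auto.
      * intros p Hp. apply (D_ext (fun t => g (shift 1 p t))); auto.
Qed.

Lemma lin_to_aff G Gt : linearly_equivalent G Gt -> affinely_equivalent G Gt.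
Proof.
  intros [M [Hd Hpb]].
  set (d := M 0%nat 0%nat * M 1%nat 1%nat - M 0%nat 1%nat * M 1%nat 0%nat) in *.
  exists (fun _ => True), (fun _ => True),
    (fun p => (M 0%nat 0%nat * fst p + M 0%nat 1%nat * snd p, M 1%nat 0%nat * fst p + M 1%nat 1%nat * snd p)).
  assert (Ho : open2 (fun _ => True)) by (intros p _; exists 1; split; auto; lra).
  split; [exists (0,0); exact I|]. split.
  - split; [exact Ho|]. split; [exact Ho|]. split; [auto|]. split.
    + split; [exact (smooth_lin _ (M 0%nat 0%nat) (M 0%nat 1%nat))|exact (smooth_lin _ (M 1%nat 0%nat) (M 1%nat 1%nat))].
    + exists (fun q => ((M 1%nat 1%nat * fst q - M 0%nat 1%nat * snd q) / d, (- M 1%nat 0%nat * fst q + M 0%nat 0%nat * snd q) / d)).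
      split; [auto|]. split; [|split].
      * intros [x y] _. simpl. f_equal; unfold d in *; field; auto.
      * intros [x y] _. simpl. f_equal; unfold d in *; field; auto.
      * split; intros n.
        -- apply (Ck_ext _ n _ (fun q => (M 1%nat 1%nat / d) * fst q + (- M 0%nat 1%nat / d) * snd q)).
           intros q; simpl; field; auto. apply smooth_lin.
        -- apply (Ck_ext _ n _ (fun q => (- M 1%nat 0%nat / d) * fst q + (M 0%nat 0%nat / d) * snd q)).
           intros q; simpl; field; auto. apply smooth_lin.
  - exists (fun k i _ => M k i), (fun _ _ _ _ => 0). split; [|split].
    + intros k i Hk Hi p _. destruct (lt2 k Hk) as [->| ->]; destruct (lt2 i Hi) as [->| ->];
      simpl; (eapply D_val; [first [apply D_lin1|apply D_lin2]|]); ring.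
    + intros k i j _ _ _ p _. apply D_const'.
    + intros p _ i j k Hi Hj Hk. exact (Hpb i j k Hi Hj Hk).
Qed.

Theorem theorem3p8 (G Gt : TypeA) :
  ric_nondegenerate G -> ric_nondegenerate Gt ->
  (linearly_equivalent G Gt <-> affinely_equivalent G Gt).
Proof.
  intros HG HGt. split.
  - apply lin_to_aff.
  - apply aff_to_lin; auto.
Qed.
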